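(* Let $\mathcal{C}$ be a class of $\Sigma$-algebras and assume that $\mathbf{T}_{\le 0}/{\sim_{\mathcal{C}}}$ is finite. Let $S_0 = \{s_1,\dots,s_m\} \subseteq \mathbf{T}_{\le 0}$ be such that $\mathbf{T}_{\le 0}/{\sim_{\mathcal{C}}} = \{[s_1],\dots,[s_m]\}$. Let $\dot\Sigma_0 \subseteq \dot\Sigma$ be the finite set of characters $f(t_1,\dots,t_{i-1},\_,t_{i+1},\dots,t_n)$ with $f\in\Sigma$ $n$-ary, $i\in\{1,\dots,n\}$ and $t_j\in S_0$ for all $j\ne i$. Then, if $\dot\Sigma_0^*/{\dot\sim_{\mathcal{C}}}$ is finite, $\dot\Sigma^*/{\dot\sim_{\mathcal{C}}}$ is finite.
   Context: $\Sigma$ is a finite algebraic signature and $V$ a non-empty finite set of variables; $\mathbf{T}$ is the set of $\Sigma$-terms over $V$. A $\Sigma$-algebra has a non-empty finite universe and an interpretation of each function symbol; $t \sim_{\mathcal{C}} s$ iff $t$ and $s$ evaluate equally under all valuations in all algebras in $\mathcal{C}$. $\mathrm{vo}(t)$ is the number of variable occurrences in $t$, and $\mathbf{T}_{\le k}=\{t\in\mathbf{T} : \mathrm{vo}(t)\le k\}$. $\dot\Sigma$ is the set of characters $f(t_1,\dots,t_{i-1},\_,t_{i+1},\dots,t_n)$ where $f\in\Sigma$ is $n$-ary, $i\in\{1,\dots,n\}$, and each $t_j$ ($j\ne i$) has $\mathrm{vo}(t_j)=0$. For $w\in\dot\Sigma^*$, $w[t]$ is defined by $\varepsilon[t]=t$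 and $(f(t_1,\dots,\_,\dots,t_n)\,w')[t] = f(t_1,\dots,t_{i-1},w'[t],t_{i+1},\dots,t_n)$. $w\ \dot\sim_{\mathcal{C}}\ w'$ iff $w[a]\sim_{\mathcal{C}} w'[a]$ for any variable $a\in V$ (the relation is considered on $\dot\Sigma^*$ and on its restriction to $\dot\Sigma_0^*$). *)

(* Defs.v *)
From mathcomp Require Import all_boot.
From Stdlib Require Import List.
Set Implicit Arguments. Unset Strict Implicit. Unset Printing Implicit Defensive.

Record signature := Signature { sym : finType; arity : sym -> nat }.

Section Terms.
Variables (Sig : signature) (V : Type).

Inductive term : Type :=
| Var : V -> term
| App : forall f : sym Sig, ('I_(arity f) -> term) -> term.

Fixpoint vo (t : term) : nat :=
  match t with
  | Var _ => 1
  | App f a => \sum_(j < arity f) vo (a j)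
  end.

(* Sigma-algebras: non-empty finite universe with interpretations. *)
Record algebra := Algebra {
  carrier : finType;
  carrier_elt : carrier;
  op : forall f : sym Sig, ('I_(arity f) -> carrier) -> carrier }.

Fixpoint eval (A : algebra) (v : V -> carrier A) (t : term) : carrier A :=
  match t with
  | Var x => v x
  | App f a => @op A f (fun j => eval v (a j))
  end.

Definition equivC (C : algebra -> Prop) (t s : term) : Prop :=
  forall A : algebra, C A -> forall v : V -> carrier A, eval v t = eval v s.

(* Raw characters f(t_1,..,_,..,t_n): the entry at the hole position is ignored. *)
Record rchar := RChar {
  rc_f : sym Sig;
  rc_i : 'I_(arity rc_f);
  rc_args : 'I_(arity rc_f) -> term }.

Definition is_char (c : rchar) : Prop :=
  forall j, j != @rc_i c -> vo (@rc_args c j) = 0.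

Definition is_char0 (S0 : list term) (c : rchar) : Prop :=
  forall j, j != @rc_i c -> In (@rc_args c j) S0.

Definition fill (c : rchar) (t : term) : term :=
  App (fun j => if j == @rc_i c then t else @rc_args c j).

Definition wapp (w : list rchar) (t : term) : term := foldr fill t w.

Definition dequivC (C : algebra -> Prop) (w w' : list rchar) : Prop :=
  forall a : V, equivC C (wapp w (Var a)) (wapp w' (Var a)).

End Terms.

Definition finite_quotient (X : Type) (P : X -> Prop) (R : X -> X -> Prop) : Prop :=
  exists l : list X, (forall y, In y l -> P y) /\
    forall x, P x -> exists y, In y l /\ R x y.

(* Main.v *)
Require Import Defs.
From mathcomp Require Import all_boot.
From Stdlib Require Import List.
From Stdlib Require Import ClassicalEpsilon FunctionalExtensionality.

Section Aux.
Variables (Sig : signature) (V : finType).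

Lemma fill_cong (A : algebra Sig) (v : V -> carrier A) (c : rchar Sig V) t t' :
  eval v t = eval v t' -> eval v (fill c t) = eval v (fill c t').
Proof.
move=> H /=; congr (op _); apply: functional_extensionality => j.
by case: (j == rc_i c).
Qed.

Lemma char_repr (C : algebra Sig -> Prop) (S0 : list (term Sig V))
  (HS0cov : forall t : term Sig V, vo t = 0 -> exists s, In s S0 /\ equivC C t s)
  (c : rchar Sig V) : is_char c ->
  exists c', is_char0 S0 c' /\ forall A, C A -> forall v t,
    @eval Sig V A v (fill c' t) = @eval Sig V A v (fill c t).
Proof.
case: c => f i args Hc.
have H : forall j, exists s, (j != i -> In s S0 /\ equivC C (args j) s).
  move=> j; case: (boolP (j != i)) => Hj.
    have [s [Hs1 Hs2]] := HS0cov _ (Hc j Hj).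
    by exists s.
  by exists (args j).
pose g := fun j => proj1_sig (constructive_indefinite_description _ (H j)).
have Hg : forall j, j != i -> In (g j) S0 /\ equivC C (args j) (g j).
  move=> j; rewrite /g; case: (constructive_indefinite_description _ _) => s Hs /=.
  exact: Hs.
exists (RChar i g); split.
  by move=> j /= Hj; case: (Hg j Hj).
move=> A HA v t /=; congr (op _); apply: functional_extensionality => j.
case: (boolP (j == i)) => // Hj.
by case: (Hg j Hj) => _ E; rewrite (E A HA v).
Qed.

Lemma word_repr (C : algebra Sig -> Prop) (S0 : list (term Sig V))
  (HS0cov : forall t : term Sig V, vo t = 0 -> exists s, In s S0 /\ equivC C t s)
  (w : list (rchar Sig V)) : Forall (@is_char Sig V) w ->
  exists w', Forall (is_char0 S0) w' /\ forall A, C A -> forall v t,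
    @eval Sig V A v (wapp w' t) = @eval Sig V A v (wapp w t).
Proof.
elim: w => [|c w IH] Hw.
  by exists nil; split.
inversion Hw as [|c0 w0 Hc Hw' E]; subst.
have [w' [Hw'0 Ew]] := IH Hw'.
have [c' [Hc' Ec]] := @char_repr C S0 HS0cov c Hc.
exists (c' :: w'); split; first by constructor.
move=> A HA v t.
change (eval v (fill c' (wapp w' t)) = eval v (fill c (wapp w t))).
rewrite (Ec A HA v); apply: fill_cong; exact: Ew.
Qed.

End Aux.

Theorem lemma2p12 (Sig : signature) (V : finType) (a0 : V)
    (C : algebra Sig -> Prop)
    (Hfin0 : finite_quotient (fun t : term Sig V => vo t = 0) (equivC C))
    (S0 : list (term Sig V))
    (HS0 : forall s, In s S0 -> vo s = 0)
    (HS0cov : forall t : term Sig V, vo t = 0 -> exists s, In s S0 /\ equivC C t s) :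
  finite_quotient (fun w : list (rchar Sig V) => Forall (is_char0 S0) w) (dequivC C) ->
  finite_quotient (fun w : list (rchar Sig V) => Forall (@is_char Sig V) w) (dequivC C).
Proof.
move=> [l [Hl Hcov]]; exists l; split.
  move=> y Hy; apply: Forall_impl (Hl y Hy) => c Hc j Hj.
  exact: HS0 (Hc j Hj).
move=> x Hx.
have [x' [Hx' Ex]] := @word_repr Sig V C S0 HS0cov x Hx.
have [y [Hy Ey]] := Hcov x' Hx'.
exists y; split => // a A HA v.
by rewrite -(Ex A HA v) (Ey a A HA v).
Qed.
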